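(* Let $xy$ be a heavy pair such that $y$ lies strictly above $r(x)$ on the path $\pi(s,u_{H_x})$ and the $T$-edge $(y,y_h)$ lies on $\pi_x(s,H_x)$. Let $\widehat C(x,y)=\bigcup\{C\in\mathcal{C}_x:(y,y_h)\in\pi_x(s,C)\}$. Then $G\setminus\{x,y\}$ is connected if and only if there is an edge of $G\setminus\{x,y\}$ with exactly one endpoint in $\widehat C(x,y)\cup H_y$.
   Context: $G=(V,E)$ is a connected graph with no cut vertex, $T$ a BFS tree rooted at $s$, $\pi(u,v)$ the $T$-path, $T_x$ the subtree at $x$, $V_x=V(T_x)\setminus\{x\}$. The heavy child $x_h$ of a non-leaf $x$ is its child with largest subtree (ties broken consistently). $\mathcal{C}_x$ is the set of components of $G[V_x]$, $C_{x,v}$ the one containing $v$, and $H_x=C_{x,x_h}$. For each $C\in\mathcal{C}_x$ a fixed edge $(u_C,v_C)\in E$ with $v_C\in C$, $u_C\notin V(T_x)$, and $\pi_x(s,C)=\pi(s,u_C)\circ(u_C,v_C)$. $R(x)=\{v\in V\setminus V(T_x):v\text{ has a neighbour in }H_x\}$ and $r(x)$ is the $T$-lowest common ancestor of $R(x)$. $x,y$ is independent if neither is a $T$-ancestor of the other. For independent $x,y$, $C\in\mathcal{C}_x$ is fully-$y$-sensitive if $y\in\pi_x(s,C)$ and $\pi_x(s,C)$ contains no $T$-edge $(y,y')$ with $x\notin\pi_y(s,C_{y,y'})$; $\mathcal{FS}(x,y)$ is the set of such components. $\langle x,y\rangle$ is an ordered light pair if some $C\in\mathcal{FS}(x,y)$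 has $(y,y_h)\notin\pi_x(s,C)$; an independent pair $xy$ is heavy if neither ordering is an ordered light pair. *)

(* Defs.v *)
(* finite simple graphs as symmetric irreflexive relations. *)
From mathcomp Require Import all_boot.
Set Implicit Arguments. Unset Strict Implicit. Unset Printing Implicit Defensive.

Section GraphDefs.
Variable T : finType.
Variable e : rel T.

Definition er (A : {set T}) : rel T :=
  fun a b => [&& e a b, a \in A & b \in A].

Definition connectedIn (A : {set T}) : Prop :=
  forall a b, a \in A -> b \in A -> connect (er A) a b.

Definition crossing_edge (A S : {set T}) : Prop :=
  exists a b, [/\ e a b, a \in A, b \in A & (a \in S) != (b \in S)].

Variable s : T.
Variable par : T -> T.  (* parent function of the rooted tree T; par s = s *)

Definition anc (a v : T) : bool := [exists k : 'I_#|T|.+1, iter k par v == a].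

Definition bfs_tree : Prop :=
  [/\ par s = s,
      (forall v, v != s -> par v != v /\ e v (par v)),
      (forall v, exists k, iter k par v = s) &
      (* the tree path from v to s is a shortest s-v path in G *)
      (forall v p, path e s p -> last s p = v ->
         exists2 k, k <= size p & iter k par v = s)].

Definition tedge (a b : T) : bool := (par b == a) && (b != a).

Definition subtree (x : T) : {set T} := [set v | anc x v].
Definition Vx (x : T) : {set T} := subtree x :\ x.

Variable hc : T -> T.

Definition heavy_child_spec : Prop :=
  forall x, (exists c, tedge x c) ->
    tedge x (hc x) /\ forall c, tedge x c -> #|subtree c| <= #|subtree (hc x)|.

(* C_{x,v} : component of G[V_x] containing v (empty if v \notin V_x) *)
Definition comp (x v : T) : {set T} :=
  [set w | (w \in Vx x) && connect (er (Vx x)) v w].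

Definition comps (x : T) : {set {set T}} := [set comp x v | v in Vx x].

Definition Hx (x : T) : {set T} := comp x (hc x).

Variables uC vC : T -> {set T} -> T.

Definition fixed_edges_spec : Prop :=
  forall x C, x != s -> C \in comps x ->
    [/\ e (uC x C) (vC x C), vC x C \in C & uC x C \notin subtree x].

(* vertex v lies on pi_x(s,C) = pi(s,u_C) o (u_C,v_C) *)
Definition pvert (x : T) (C : {set T}) (v : T) : bool :=
  anc v (uC x C) || (v == vC x C).

Definition pedge (x : T) (C : {set T}) (a b : T) : bool :=
  [|| anc b (uC x C) && tedge a b,
      anc a (uC x C) && tedge b a,
      (a == uC x C) && (b == vC x C) |
      (b == uC x C) && (a == vC x C)].

Definition tpedge (x : T) (C : {set T}) (a b : T) : bool :=
  tedge a b && pedge x C a b.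

Definition independent (x y : T) : bool := ~~ anc x y && ~~ anc y x.

Definition fully_sensitive (x y : T) (C : {set T}) : bool :=
  [&& C \in comps x, pvert x C y &
      [forall y', tpedge x C y y' ==> pvert y (comp y y') x]].

Definition FS (x y : T) : {set {set T}} := [set C | fully_sensitive x y C].

Definition ordered_light (x y : T) : bool :=
  [exists C in FS x y, ~~ tpedge x C y (hc y)].

Definition heavy_pair (x y : T) : bool :=
  [&& independent x y, ~~ ordered_light x y & ~~ ordered_light y x].

Definition Rset (x : T) : {set T} :=
  [set v | (v \notin subtree x) && [exists w in Hx x, e v w]].

Definition is_lca (S : {set T}) (r : T) : Prop :=
  (forall v, v \in S -> anc r v) /\
  (forall r', (forall v, v \in S -> anc r' v) -> anc r' r).

Definition Chat (x y : T) : {set T} :=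
  \bigcup_(C in comps x | tpedge x C y (hc y)) C.

End GraphDefs.

(* Main.v *)
Require Import Defs.
From mathcomp Require Import all_boot.
Set Implicit Arguments. Unset Strict Implicit. Unset Printing Implicit Defensive.

Section Tree.
Variables (T : finType) (e : rel T) (s : T) (par : T -> T).
Hypothesis e_sym : symmetric e.
Hypothesis T_bfs : bfs_tree e s par.

Lemma par_s : par s = s. Proof. by case: T_bfs. Qed.
Lemma par_edge v : v != s -> par v != v /\ e v (par v). Proof. by case: T_bfs => _ H _ _; apply: H. Qed.
Lemma reach_s v : exists k, iter k par v = s. Proof. by case: T_bfs => _ _ H _; apply: H. Qed.

Lemma iter_s k : iter k par s = s.
Proof. by elim: k => //= k ->; rewrite par_s. Qed.

Lemma iter_card v : iter #|T| par v = s.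
Proof.
have ex : exists k, (fun k => iter k par v == s) k.
  by case: (reach_s v) => k hk; exists k; apply/eqP.
pose m := ex_minn ex.
have hm : iter m par v = s by rewrite /m; case: ex_minnP => k /eqP.
have hmin : forall k, iter k par v = s -> m <= k.
  by move=> k hk; rewrite /m; case: ex_minnP => n _ H; apply: H; apply/eqP.
have inj : injective (fun i : 'I_m.+1 => iter i par v).
  move=> i j /= hij; apply/val_inj => /=.
  wlog lt : i j hij / i < j.
    move=> W; case: (ltngtP i j) => h; [exact: W| |exact: h].
    by symmetry; apply: W.
  have hj : j <= m by rewrite -ltnS.
  have : iter (m - j + i) par v = s.
    by rewrite iterD hij -iterD subnK.
  move/hmin; rewrite -(leq_add2r j) addnAC subnK // => h.
  by rewrite leq_add2l leqNgt lt in h.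
have := leq_card _ inj; rewrite card_ord => hc.
by rewrite -(subnK (ltnW hc)) iterD hm iter_s.
Qed.

Lemma ancP a v : reflect (exists k, iter k par v = a) (anc par a v).
Proof.
apply: (iffP existsP).
  by case=> k /eqP h; exists k.
case=> k hk; case: (leqP k #|T|) => h.
  by exists (Ordinal (n:=#|T|.+1) (m:=k) h); apply/eqP.
have : iter k par v = s by rewrite -(subnK (ltnW h)) iterD iter_card iter_s.
rewrite hk => ->.
by exists ord_max; rewrite /= iter_card.
Qed.

Lemma anc_refl v : anc par v v. Proof. by apply/ancP; exists 0. Qed.
Lemma anc_par v : anc par (par v) v. Proof. by apply/ancP; exists 1. Qed.
Lemma anc_s v : anc par s v.
Proof. by apply/ancP; case: (reach_s v) => k hk; exists k. Qed.
Lemma anc_trans a b c : anc par a b -> anc par b c -> anc par a c.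
Proof.
move=> /ancP[i hi] /ancP[j hj]; apply/ancP; exists (i + j).
by rewrite iterD hj.
Qed.
Lemma anc_chain a b v : anc par a v -> anc par b v -> anc par a b || anc par b a.
Proof.
move=> /ancP[i hi] /ancP[j hj]; case: (leqP i j) => h.
  apply/orP; right; apply/ancP; exists (j - i).
  by rewrite -hi -iterD subnK.
apply/orP; left; apply/ancP; exists (i - j).
by rewrite -hj -iterD subnK // ltnW.
Qed.
Lemma anc_sE a : anc par a s -> a = s.
Proof. by move=> /ancP[k]; rewrite iter_s. Qed.
Lemma anc_antisym a b : anc par a b -> anc par b a -> a = b.
Proof.
move=> /ancP[i hi] /ancP[j hj].
have per : forall n, iter (n * (j + i)) par b = b.
  elim=> // n IH; by rewrite mulSn iterD IH iterD hi hj.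
case: (posnP (j + i)) => h.
  by move: h => /eqP; rewrite addn_eq0 => /andP[_ /eqP i0]; rewrite -hi i0.
have hb : b = s.
  rewrite -(per #|T|) -(subnK (_ : #|T| <= #|T| * (j + i))) ?iterD ?iter_card ?iter_s //.
  by rewrite -{1}(muln1 #|T|) leq_mul2l h orbT.
by rewrite -hi hb iter_s.
Qed.
Lemma anc_child a c : anc par a c -> a = c \/ anc par a (par c).
Proof.
move=> /ancP[[|k]]; first by left.
by rewrite iterSr => h; right; apply/ancP; exists k.
Qed.

Lemma tedge_anc a b : tedge par a b -> anc par a b.
Proof. by case/andP=> /eqP <- _; apply: anc_par. Qed.

Lemma subtree_conn y c v : tedge par y c -> anc par c v ->
  connect (er e (Vx par y)) c v.
Proof.
move=> hyc /ancP[k]; elim: k v => [|k IH] v.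
  by move=> /= ->; apply: connect0.
move=> hk.
have hk' : iter k par (par v) = c by rewrite -iterSr.
have hvs : v != s.
  apply/eqP=> vs; move: hk; rewrite vs iter_s => cs.
  by move: hyc; rewrite /tedge -cs par_s => /andP[/eqP -> ]; rewrite eqxx.
have [_ evp] := par_edge hvs.
have hyc' := tedge_anc hyc.
have ac : anc par c v by apply/ancP; exists k.+1.
have acp : anc par c (par v) by apply/ancP; exists k.
have inV : forall z, anc par c z -> z \in Vx par y.
  move=> z hz; rewrite !inE (anc_trans hyc' hz) andbT.
  apply/eqP=> zy; move: hz; rewrite zy => hcy.
  have := anc_antisym hcy hyc'; move: hyc => /andP[_ /eqP]; by [].
apply: (connect_trans (IH _ hk')); apply: connect1.
by rewrite /er (inV _ ac) (inV _ acp) e_sym evp.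
Qed.


Variables (hc : T -> T) (uC vC : T -> {set T} -> T).
Hypothesis uv_spec : fixed_edges_spec e s par uC vC.

Lemma ind_ne_s p q : independent par p q -> p != s.
Proof. by move=> /andP[h _]; apply/eqP=> ps; move: h; rewrite ps anc_s. Qed.
Lemma indC p q : independent par p q -> independent par q p.
Proof. by rewrite /independent andbC. Qed.
Lemma ind_disj p q z : independent par p q -> anc par p z -> anc par q z -> False.
Proof. by move=> /andP[h1 h2] a1 a2; move: (anc_chain a1 a2); rewrite (negbTE h1) (negbTE h2). Qed.
Lemma Vx_notin p q z : independent par p q -> z \in Vx par p -> (z != p) && (z != q).
Proof.
move=> hi; rewrite !inE => /andP[-> hz] /=; apply/eqP=> zq.
by move: hi => /andP[h _]; rewrite -zq hz in h.
Qed.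
Lemma comp_sub p w z : z \in Defs.comp e par p w ->
  z \in Vx par p /\ connect (er e (Vx par p)) w z.
Proof. by rewrite inE => /andP[-> ->]. Qed.
Lemma comp_self p w : w \in Vx par p -> w \in Defs.comp e par p w.
Proof. by move=> h; rewrite inE h connect0. Qed.
Lemma comps_sub p C z : C \in comps e par p -> z \in C -> z \in Vx par p.
Proof. by case/imsetP=> w _ -> /comp_sub[]. Qed.
Lemma comp_child t c z : tedge par t c -> anc par c z -> z \in Defs.comp e par t c.
Proof.
move=> htc hcz; rewrite inE (subtree_conn htc hcz) andbT !inE.
rewrite (anc_trans (tedge_anc htc) hcz) andbT; apply/eqP=> zt.
move: hcz; rewrite zt => hct; have := anc_antisym hct (tedge_anc htc).
by move: htc => /andP[_ /eqP].
Qed.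
Lemma er_sym B : symmetric (er e B).
Proof. by move=> a b; rewrite /er e_sym; case: (a \in B); case: (b \in B); rewrite ?andbF. Qed.

Lemma tpedge_anc2 p q C c : independent par p q -> C \in comps e par p ->
  tpedge par uC vC p C q c -> anc par c (uC p C).
Proof.
move=> hi hC /andP[htc]; have [_ hv _] := uv_spec (ind_ne_s hi) hC.
have hvV := comps_sub hC hv.
rewrite /pedge => /or4P[/andP[]//|/andP[_ hcq]|/andP[/eqP qu /eqP cv]|/andP[/eqP cu /eqP qv]].
- have := anc_antisym (tedge_anc hcq) (tedge_anc htc).
  by move: htc => /andP[_ /eqP].
- exfalso; move: hvV; rewrite -cv !inE => /andP[_ hpc].
  exact: (ind_disj hi hpc (tedge_anc htc)).
- by move: hvV; rewrite -qv !inE => /andP[_ hpq]; move: hi => /andP[]; rewrite hpq.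
Qed.

Section PQ.
Variables (p q : T) (A : {set T}).
Hypothesis hA : forall z, (z \in A) = (z != p) && (z != q).
Hypothesis ind : independent par p q.

Definition good z := connect (er e A) z s.

Lemma good_conn a b : connect (er e A) a b -> good b -> good a.
Proof. exact: connect_trans. Qed.
Lemma conn_symA a b : connect (er e A) a b -> connect (er e A) b a.
Proof. by rewrite (sym_connect_sym (er_sym A)). Qed.
Lemma good_edge a b : a \in A -> b \in A -> e a b -> good b -> good a.
Proof. by move=> ha hb hab; apply: good_conn; apply: connect1; rewrite /er hab ha hb. Qed.
Lemma VxA t z : (t == p) || (t == q) -> z \in Vx par t -> z \in A.
Proof.
rewrite hA => /orP[/eqP->|/eqP->] hz.
  exact: Vx_notin ind hz.
by rewrite andbC; exact: Vx_notin (indC ind) hz.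
Qed.
Lemma lift_conn t a b : (t == p) || (t == q) ->
  connect (er e (Vx par t)) a b -> connect (er e A) a b.
Proof.
move=> ht; apply: connect_sub => u v /andP[euv /andP[hu hv]].
by apply: connect1; rewrite /er euv (VxA ht hu) (VxA ht hv).
Qed.
Lemma R0_good v : ~~ anc par p v -> ~~ anc par q v -> good v.
Proof.
case: (reach_s v) => k; elim: k v => [|k IH] v.
  by move=> /= ->; rewrite /good connect0.
rewrite iterSr => hk hp hq.
case: (eqVneq v s) => [->|vs]; first by rewrite /good connect0.
have [_ evp] := par_edge vs.
have hp' : ~~ anc par p (par v).
  by apply: contra hp => h; exact: anc_trans h (anc_par v).
have hq' : ~~ anc par q (par v).
  by apply: contra hq => h; exact: anc_trans h (anc_par v).
have inA : forall z, ~~ anc par p z -> ~~ anc par q z -> z \in A.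
  move=> z h1 h2; rewrite hA; apply/andP; split; apply/eqP=> zz.
    by move: h1; rewrite zz anc_refl.
  by move: h2; rewrite zz anc_refl.
apply: (good_edge (inA _ hp hq) (inA _ hp' hq') evp).
exact: IH.
Qed.
Lemma comp_good t w z : (t == p) || (t == q) -> z \in Defs.comp e par t w -> good z -> good w.
Proof. by move=> ht /comp_sub[_ hcn]; apply: good_conn; exact: lift_conn ht hcn. Qed.

Lemma main_pq w : w \in Vx par p ->
  good w \/ Defs.comp e par p w \in FS e par uC vC p q.
Proof.
move=> hw; set C := Defs.comp e par p w.
have hC : C \in comps e par p by apply: imset_f.
have ps := ind_ne_s ind; have qs := ind_ne_s (indC ind).
have hpp : (p == p) || (p == q) by rewrite eqxx.
have hqq : (q == p) || (q == q) by rewrite eqxx orbT.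
have [euv hv hu] := uv_spec ps hC.
have hvA := VxA hpp (comps_sub hC hv).
have hwC : w \in C := comp_self hw.
case hq: (anc par q (uC p C)).
- case fs: (fully_sensitive e par uC vC p q C); first by right; rewrite inE fs.
  left; move: fs; rewrite /fully_sensitive hC /pvert hq /=.
  move=> /negbT /forallPn [y']; rewrite negb_imply => /andP[htp hnp].
  have hty : tedge par q y' by case/andP: htp.
  have hy'V : y' \in Vx par q.
    rewrite !inE (tedge_anc hty) andbT; by case/andP: hty => _.
  set D := Defs.comp e par q y'.
  have hD : D \in comps e par q by apply: imset_f.
  have [eu2 hv2 hu2] := uv_spec qs hD.
  move: hnp; rewrite negb_or => /andP[hnp _].
  have hu2A : uC q D \in A.
    rewrite hA; apply/andP; split; apply/eqP=> zz.
      by move: hnp; rewrite zz anc_refl.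
    by move: hu2; rewrite zz !inE anc_refl.
  have gu2 : good (uC q D) by apply: R0_good => //; move: hu2; rewrite inE.
  have gv2 : good (vC q D).
    apply: (good_edge (VxA hqq (comps_sub hD hv2)) hu2A _ gu2); by rewrite e_sym.
  have gy' : good y' := comp_good hqq hv2 gv2.
  have hau := tpedge_anc2 ind hC htp.
  have huA : uC p C \in A.
    rewrite hA; apply/andP; split; apply/eqP=> zz.
      by move: hu; rewrite zz !inE anc_refl.
    move: hau; rewrite zz => hy'q.
    have := anc_antisym hy'q (tedge_anc hty); by case/andP: hty => _ /eqP.
  have gu : good (uC p C).
    apply: good_conn gy'; apply: conn_symA; apply: lift_conn hqq _.
    exact: subtree_conn hty hau.
  have gv : good (vC p C) by apply: good_edge hvA huA _ gu; rewrite e_sym.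
  exact: comp_good hpp hv gv.
- left.
  have huA : uC p C \in A.
    rewrite hA; apply/andP; split; apply/eqP=> zz.
      by move: hu; rewrite zz !inE anc_refl.
    by move: hq; rewrite zz anc_refl.
  have gu : good (uC p C) by apply: R0_good; [move: hu; rewrite inE | rewrite hq].
  have gv : good (vC p C) by apply: good_edge hvA huA _ gu; rewrite e_sym.
  exact: comp_good hpp hv gv.
Qed.
End PQ.


Lemma cross_lemma (r : rel T) (S : {set T}) a b :
  connect r a b -> a \in S -> b \notin S ->
  exists u v, [/\ r u v, u \in S & v \notin S].
Proof.
move=> /connectP[pth]; elim: pth a => [|c pth IH] a /=.
  by move=> _ -> ->.
move=> /andP[rac hp] hb ha hnb.
case hcS: (c \in S); first exact: IH hp hb hcS hnb.
by exists a, c; rewrite hcS.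
Qed.

Lemma main_thm (x y r : T)
    (xy_heavy : heavy_pair e par hc uC vC x y)
    (r_lca : is_lca par (Rset e par hc x) r)
    (y_above : anc par y r) (y_ne_r : y != r)
    (yyh_on : tpedge par uC vC x (Hx e par hc x) y (hc y)) :
  connectedIn e (setT :\ x :\ y) <->
  crossing_edge e (setT :\ x :\ y) (Chat e par hc uC vC x y :|: Hx e par hc y).
Proof.
move: (xy_heavy) => /and3P[ind nlxy nlyx].
set A := setT :\ x :\ y.
set S := Chat e par hc uC vC x y :|: Hx e par hc y.
have hA : forall z, (z \in A) = (z != x) && (z != y).
  by move=> z; rewrite !inE andbT andbC.
have hA' : forall z, (z \in A) = (z != y) && (z != x).
  by move=> z; rewrite !inE andbT.
clearbody A.
have xs := ind_ne_s ind; have ys := ind_ne_s (indC ind).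
have hxx : (x == x) || (x == y) by rewrite eqxx.
have hyy : (y == x) || (y == y) by rewrite eqxx orbT.
have hcy : tedge par y (hc y) by case/andP: yyh_on.
have hcyV : hc y \in Vx par y.
  by rewrite !inE (tedge_anc hcy) andbT; case/andP: hcy.
have hcyH : hc y \in Hx e par hc y by apply: comp_self.
have Sconn : forall z, z \in S -> connect (er e A) (hc y) z.
  move=> z; rewrite inE => /orP[/bigcupP[C /andP[hC htp] hz]|hz].
    have [euv hv hu] := uv_spec xs hC.
    have hau := tpedge_anc2 ind hC htp.
    have c1 : connect (er e A) (hc y) (uC x C).
      apply: (lift_conn hA ind hyy); exact: subtree_conn hcy hau.
    have huA : uC x C \in A.
      rewrite hA; apply/andP; split; apply/eqP=> zz.
        by move: hu; rewrite zz !inE anc_refl.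
      move: hau; rewrite zz => h; have := anc_antisym h (tedge_anc hcy).
      by case/andP: hcy => _ /eqP.
    have hvA := VxA hA ind hxx (comps_sub hC hv).
    apply: (connect_trans c1); apply: (connect_trans (connect1 (_ : er e A _ (vC x C)))).
      by rewrite /er euv huA hvA.
    move: hC hv hz => /imsetP[w0 _ ->] /comp_sub[_ h1] /comp_sub[_ h2].
    apply: connect_trans _ (lift_conn hA ind hxx h2).
    rewrite (sym_connect_sym (er_sym _)).
 exact (lift_conn hA ind hxx h1).
  by move: hz => /comp_sub[_ h]; exact (lift_conn hA ind hyy h).
have classify : forall z, z \in A -> good A z \/ z \in S.
  move=> z; rewrite hA => /andP[zx zy].
  case ax: (anc par x z).
    have hzV : z \in Vx par x by rewrite !inE zx ax.
    case: (main_pq hA ind hzV) => [|hfs]; first by left.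
    right; rewrite inE; apply/orP; left; apply/bigcupP.
    exists (Defs.comp e par x z); last exact: comp_self.
    rewrite (imset_f _ hzV) /=.
    move: nlxy; rewrite /ordered_light => /existsPn /(_ (Defs.comp e par x z)).
    by rewrite hfs /= negbK.
  case ay: (anc par y z); last by left; apply: (R0_good hA); rewrite ?ax ?ay.
  have hzV : z \in Vx par y by rewrite !inE zy ay.
  case: (main_pq hA' (indC ind) hzV) => [|hfs]; first by left.
  right; rewrite inE; apply/orP; right.
  set C' := Defs.comp e par y z.
  have hC' : C' \in comps e par y by apply: imset_f.
  have htp : tpedge par uC vC y C' x (hc x).
    move: nlyx; rewrite /ordered_light => /existsPn /(_ C').
    by rewrite hfs /= negbK.
  have hcx : tedge par x (hc x) by case/andP: htp.
  have [euv hv hu] := uv_spec ys hC'.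
  have hau := tpedge_anc2 (indC ind) hC' htp.
  have huH : uC y C' \in Hx e par hc x by apply: comp_child.
  have hvV := comps_sub hC' hv.
  have hvR : vC y C' \in Rset e par hc x.
    rewrite inE; apply/andP; split.
      rewrite inE; apply/negP=> hx; move: hvV; rewrite !inE => /andP[_ hy].
      exact: (ind_disj ind hx hy).
    by apply/existsP; exists (uC y C'); rewrite huH e_sym euv.
  have hrv := r_lca.1 _ hvR.
  have hcxV : hc x \in Vx par x.
    by rewrite !inE (tedge_anc hcx) andbT; case/andP: hcx.
  have hHx : Hx e par hc x \in comps e par x by apply: imset_f.
  have [euH hvH huH'] := uv_spec xs hHx.
  have huHR : uC x (Hx e par hc x) \in Rset e par hc x.
    rewrite inE huH' /=; apply/existsP; exists (vC x (Hx e par hc x)).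
    by rewrite hvH euH.
  have hru := r_lca.1 _ huHR.
  have hyu := tpedge_anc2 ind hHx yyh_on.
  have hyr : anc par (hc y) r.
    case/orP: (anc_chain hyu hru) => // h.
    case: (anc_child h) => [->|h']; first exact: anc_refl.
    move: h'; case/andP: hcy => /eqP -> _ h'.
    by move: y_ne_r; rewrite (anc_antisym h' y_above) eqxx.
  have hvHy : vC y C' \in Hx e par hc y by apply: comp_child (anc_trans hyr hrv).
  move: hvHy hv => /comp_sub[_ c1] /comp_sub[_ c2].
  rewrite inE hzV /=; apply: connect_trans c1 _.
  by rewrite (sym_connect_sym (er_sym _)).
have sA : s \in A.
  by rewrite hA eq_sym xs eq_sym ys.
have sS : s \notin S.
  rewrite !inE negb_or; apply/andP; split.
    apply/bigcupP=> [[C /andP[hC _] hsC]].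
    move: (comps_sub hC hsC); rewrite !inE => /andP[hsx /anc_sE hxs].
    by move: xs; rewrite hxs eqxx.
  apply/negP=> /andP[/andP[_ /anc_sE hys] _].
  by move: ys; rewrite hys eqxx.
split.
- move=> hconn.
  have hcyA : hc y \in A := VxA hA ind hyy hcyV.
  have hcyS : hc y \in S by rewrite inE hcyH orbT.
  have [u [v [ruv huS hvS]]] := cross_lemma (hconn _ _ hcyA sA) hcyS sS.
  exists u, v; move: ruv => /and3P[euv huA hvA]; split => //.
  by rewrite huS (negbTE hvS).
- case=> a [b [eab haA hbA hab]].
  have gS : forall c, c \in S -> good A c.
    have key : forall a b, a \in A -> b \in A -> e a b -> a \in S -> b \notin S ->
        good A (hc y).
      move=> a' b' ha hb eab' haS hbS.
      have gb : good A b'.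
        by case: (classify _ hb) => // h; move: hbS; rewrite h.
      have ga : good A a' by apply: good_edge ha hb eab' gb.
      exact: good_conn (Sconn _ haS) ga.
    have ghy : good A (hc y).
      case haS: (a \in S); move: hab; rewrite haS => /= hbS.
        by apply: (key a b) => //; rewrite haS.
      apply: (key b a) => //; first by rewrite e_sym.
      by rewrite negbK in hbS.
      by rewrite haS.
    move=> c hc'; apply: good_conn ghy; apply: conn_symA; exact: Sconn.
  have gall : forall z, z \in A -> good A z.
    by move=> z hz; case: (classify _ hz) => // /gS.
  move=> a' b' ha hb; apply: connect_trans (gall _ ha) _.
  apply: conn_symA; exact: gall.
Qed.

End Tree.

Theorem claim4p25 (T : finType) (e : rel T) (s : T) (par hc : T -> T)
    (uC vC : T -> {set T} -> T)
    (e_sym : symmetric e) (e_irr : irreflexive e)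
    (G_conn : connectedIn e setT)
    (G_nocut : forall v, connectedIn e (setT :\ v))
    (T_bfs : bfs_tree e s par)
    (hc_spec : heavy_child_spec par hc)
    (uv_spec : fixed_edges_spec e s par uC vC)
    (x y r : T)
    (xy_heavy : heavy_pair e par hc uC vC x y)
    (r_lca : is_lca par (Rset e par hc x) r)
    (y_on_path : anc par y (uC x (Hx e par hc x)))
    (y_above : anc par y r) (y_ne_r : y != r)
    (yyh_on : tpedge par uC vC x (Hx e par hc x) y (hc y)) :
  connectedIn e (setT :\ x :\ y) <->
  crossing_edge e (setT :\ x :\ y) (Chat e par hc uC vC x y :|: Hx e par hc y).
Proof. exact: (main_thm e_sym T_bfs uv_spec xy_heavy r_lca y_above y_ne_r yyh_on). Qed.
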